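(* Let $\mathcal{X}$, $\mathcal{Y}$, $\mathcal{T}$ be finite sets, let $P_{XY}$ be a joint distribution on $\mathcal{X}\times\mathcal{Y}$, and let $P^\lambda_{T|X}$ be a stochastic mapping (conditional distribution) from $\mathcal{X}$ to $\mathcal{T}$, indexed by a hyperparameter $\lambda$. Let $I^\lambda(T;Y)$ denote the mutual information between $T$ and $Y$ under the joint distribution $P_{XY}(x,y)P^\lambda_{T|X}(t|x)$, and fix $\alpha \ge 0$. Let $\mathcal{D}_{\mathrm{MHT}} = \{(X_i,Y_i)\}_{i=1}^{n_{\mathrm{MHT}}}$ be drawn i.i.d. from $P_{XY}$, and for each $i$ let $T_i \sim P^\lambda_{T|X}(\cdot\mid X_i)$ independently. Let $\hat{I}^\lambda_{\mathcal{D}_{\mathrm{MHT}}}(T;Y)$ be the plug-in estimate $$\hat{I}^\lambda_{\mathcal{D}_{\mathrm{MHT}}}(T;Y)=\sum_{t\in\mathcal{T}}\sum_{y\in\mathcal{Y}}\hat{P}_{TY}(t,y)\log\frac{\hat{P}_{TY}(t,y)}{\hat{P}_T(t)\hat{P}_Y(y)},$$ where $\hat P_{TY}$ is the empirical joint distribution of $\{(T_i,Y_i)\}_{i=1}^{n_{\mathrm{MHT}}}$ and $\hat P_T,\hat P_Y$ are its marginals. For $\epsilon\in(0,1)$ define $$\theta(\epsilon,n_{\mathrm{MHT}})=\sqrt{\frac{2}{n_{\mathrm{MHT}}}\ln\!\left(\frac{2^{|\mathcal{T}||\mathcal{Y}|}-2}{\epsilon}\right)},$$ and $$\Delta I(\theta)=\begin{cases}\frac{\theta}{2}\log\big[(|\mathcal{T}||\mathcal{Y}|-1)(|\mathcal{T}|-1)(|\mathcal{Y}|-1)\big]+3h\!\left(\frac{\theta}{2}\right),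 & \text{if } \theta\le 2-\frac{2}{|\mathcal{T}|},\\ \log|\mathcal{T}|, & \text{if } \theta> 2-\frac{2}{|\mathcal{T}|},\end{cases}$$ with $h(x)=-x\log x-(1-x)\log(1-x)$. Define $$\hat{p}_\lambda=\inf\{\epsilon\in[0,1]:\ \hat{I}^\lambda_{\mathcal{D}_{\mathrm{MHT}}}(T;Y)-\Delta I(\theta(\epsilon,n_{\mathrm{MHT}}))\le\alpha\}.$$ Then $\hat p_\lambda$ is a valid $p$-value for the null hypothesis $\mathcal{H}_\lambda: I^\lambda(T;Y)<\alpha$, i.e., whenever $I^\lambda(T;Y)<\alpha$, we have $\Pr[\hat p_\lambda\le u]\le u$ for all $u\in[0,1]$, where the probability is over the draw of $\mathcal{D}_{\mathrm{MHT}}$ and of the $T_i$.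
   Context: All random variables take values in finite discrete alphabets. The same logarithm base is used in the plug-in estimator and in $\Delta I$ and $h$. *)

(* Defs.v *)
From HB Require Import structures.
From mathcomp Require Import all_boot all_order all_algebra.
From mathcomp Require Import classical_sets boolp reals ereal exp.
Set Implicit Arguments. Unset Strict Implicit. Unset Printing Implicit Defensive.
Import Order.TTheory GRing.Theory Num.Theory.
Local Open Scope ring_scope.

Section Defs.
Variable R : realType.

Definition logb (b x : R) : R := ln x / ln b.

Definition is_dist (A : finType) (P : A -> R) : Prop :=
  (forall a, 0 <= P a) /\ \sum_(a : A) P a = 1.

Definition is_channel (A B : finType) (W : A -> B -> R) : Prop :=
  forall a, is_dist (W a).

Definition mutinf (b : R) (T Y : finType) (Q : T -> Y -> R) : R :=
  \sum_(t : T) \sum_(y : Y)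
     (if Q t y == 0 then 0 else
      Q t y * logb b (Q t y / ((\sum_(y' : Y) Q t y') * (\sum_(t' : T) Q t' y)))).

Definition joint_TY (X Y T : finType) (PXY : X -> Y -> R) (W : X -> T -> R)
  : T -> Y -> R := fun t y => \sum_(x : X) PXY x y * W x t.

Definition emp_TY (X Y T : finType) (n : nat) (s : {ffun 'I_n -> X * Y * T})
  : T -> Y -> R := fun t y =>
  #|[set i : 'I_n | ((s i).2 == t) && ((s i).1.2 == y)]|%:R / n%:R.

Definition Ihat (b : R) (X Y T : finType) (n : nat) (s : {ffun 'I_n -> X * Y * T})
  : R := mutinf b (emp_TY s).

Definition hbin (b x : R) : R := - x * logb b x - (1 - x) * logb b (1 - x).

Definition theta (T Y : finType) (eps : R) (n : nat) : R :=
  Num.sqrt (2 / n%:R * ln ((2 ^+ (#|T| * #|Y|) - 2) / eps)).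

Definition DeltaI (b : R) (T Y : finType) (th : R) : R :=
  if th <= 2 - 2 / #|T|%:R then
    th / 2 * logb b ((#|T|%:R * #|Y|%:R - 1) * (#|T|%:R - 1) * (#|Y|%:R - 1))
    + 3 * hbin b (th / 2)
  else logb b #|T|%:R.

(* the p-value  p_hat = inf { eps in (0,1] : Ihat - DeltaI(theta(eps,n)) > alpha },
   with inf of the empty set = +oo *)
Definition phat (b alpha : R) (X Y T : finType) (n : nat)
  (s : {ffun 'I_n -> X * Y * T}) : \bar R :=
  ereal_inf [set (e%:E) | e in
    [set e : R | 0 < e <= 1 /\ Ihat b s - DeltaI b T Y (theta T Y e n) > alpha]].

(* probability of the sample s = ((X_i,Y_i,T_i))_i : (X_i,Y_i) i.i.d. ~ P_XY and
   T_i ~ W(.|X_i) independently *)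
Definition sample_prob (X Y T : finType) (n : nat) (PXY : X -> Y -> R)
  (W : X -> T -> R) (s : {ffun 'I_n -> X * Y * T}) : R :=
  \prod_(i : 'I_n) (PXY (s i).1.1 (s i).1.2 * W (s i).1.1 (s i).2).

End Defs.

(* Main.v *)
Require Import Defs.
From HB Require Import structures.
From mathcomp Require Import all_boot all_order all_algebra.
From mathcomp Require Import classical_sets boolp reals ereal exp.
From mathcomp Require Import functions sequences topology normedtype derive realfun.
From mathcomp Require Import ring lra.
Import Order.TTheory GRing.Theory Num.Theory.
Import numFieldNormedType.Exports.
Local Open Scope ring_scope.

Set Implicit Arguments. Unset Strict Implicit. Unset Printing Implicit Defensive.
Unset Implicit Arguments.

Section Hoeff.
Variable R : realType.

Lemma cont_of_der (f : R -> R) a b : (forall x, derivable f x 1) ->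
  {within `[a, b], continuous f}%classic.
Proof.
move=> df; apply/continuous_subspaceT=> r.
exact/differentiable_continuous/derivable1_diffP.
Qed.

Variable p : R.
Hypothesis p0 : 0 <= p.
Hypothesis p1 : p <= 1.

Let D (x : R) := 1 - p + p * expR x.

Lemma D_gt0 x : 0 < D x.
Proof.
rewrite /D; have := expR_gt0 x => ex.
have [->|pn1] := eqVneq p 1; first by rewrite subrr add0r mul1r.
have : 0 < 1 - p by rewrite subr_gt0 lt_neqAle pn1 p1.
move=> h; apply: lt_le_trans h _; rewrite lerDl; exact: mulr_ge0 (ltW ex).
Qed.

Lemma D_der (x : R) : is_derive x (1:R) D (p * expR x).
Proof.
have h : is_derive x (1:R) (cst (1 - p) + p \*: expR) (0 + p *: expR x).
  exact: is_deriveD.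
by move: h; rewrite add0r.
Qed.


Let u (x : R) := p * expR x / D x.

Lemma u_der (x : R) : is_derive x (1:R) u (u x * (1 - u x)).
Proof.
have hD := D_der x.
have hV : is_derive x (1:R) (fun y => (D y)^-1) (- (D x) ^- 2 *: (p * expR x)).
  apply: is_deriveV => //; exact: lt0r_neq0 (D_gt0 x).
have hE : is_derive x (1:R) (p \*: expR) (p *: expR x) by exact: is_deriveZ.
have h := is_deriveM hE hV.
apply: is_derive_eq h _.
rewrite /u /= /GRing.scale /=.
have := D_gt0 x; set d := D x => d0.
field; exact: lt0r_neq0.
Qed.

Lemma u0 : u 0 = p.
Proof. by rewrite /u /D expR0 mulr1 subrK invr1 mulr1. Qed.

Lemma u_le (c : R) : 0 <= c -> u c - p <= c / 4.
Proof.
move=> c0; have [->|cpos] := eqVneq c 0; first by rewrite u0 subrr mul0r.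
have cp : 0 < c by rewrite lt_neqAle eq_sym cpos c0.
pose G x := u x - 4^-1 * x.
have dG : forall x, is_derive x (1:R) G (u x * (1 - u x) - 4^-1).
  move=> x; have h1 := u_der x.
  have h2 : is_derive x (1:R) (4^-1 \*: id) (4^-1 *: 1) by exact: is_deriveZ.
  have h3 := is_deriveB h1 h2.
  by apply: is_derive_eq h3 _; rewrite /GRing.scale /= mulr1.
have cG : {within `[0, c], continuous G}%classic.
  by apply: cont_of_der => x; case: (dG x).
have [xi _ ] := MVT cp (fun x _ => dG x) cG.
move=> hG.
have : G c - G 0 <= 0.
  rewrite hG; apply: mulr_le0_ge0; last by rewrite subr0.
  rewrite subr_le0.
  set v := u xi.
  have : 0 <= (v - 2^-1) ^+ 2 by exact: sqr_ge0.
  move=> h; nra.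
rewrite /G u0 mulr0 subr0 subr_le0 => h.
lra.
Qed.


Lemma lnD_le (l : R) : 0 <= l -> ln (D l) <= p * l + 8^-1 * (l * l).
Proof.
move=> l0; have [->|lpos] := eqVneq l 0.
  by rewrite /D expR0 mulr1 subrK ln1 !(mulr0, mul0r) addr0.
have lp : 0 < l by rewrite lt_neqAle eq_sym lpos l0.
pose F := (p \*: id) + (8^-1 \*: (id * id)) - (@ln R \o D).
have dF : forall x, is_derive x (1:R) F (p + 4^-1 * x - u x).
  move=> x.
  have h1 : is_derive x (1:R) (p \*: id) (p *: 1) by exact: is_deriveZ.
  have h2 : is_derive x (1:R) (8^-1 \*: (id * id)) (8^-1 *: (x *: 1 + x *: 1)).
    apply: is_deriveZ; exact: is_deriveM.
  have h3 : is_derive x (1:R) (@ln R \o D) ((D x)^-1 * (p * expR x)).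
    apply: is_derive1_comp; last exact: D_der.
    exact: is_derive1_ln (D_gt0 x).
  have h4 := is_deriveB (is_deriveD h1 h2) h3.
  apply: is_derive_eq h4 _; rewrite /GRing.scale /= /u.
  have := D_gt0 x; set d := D x => d0.
  field; exact: lt0r_neq0.
have cF : {within `[0, l], continuous F}%classic.
  by apply: cont_of_der => x; case: (dF x).
have [c] := MVT lp (fun x _ => dF x) cF.
rewrite in_itv /= => /andP[c0 cl] hF.
have : 0 <= F l - F 0.
  rewrite hF; apply: mulr_ge0; last by rewrite subr0 ltW.
  have := @u_le c (ltW c0); lra.
have -> : F l - F 0 = p * l + 8^-1 * (l * l) - ln (D l).
  rewrite /F !fctE /D /=.
  rewrite expR0 mulr1 subrK ln1 /GRing.scale /=; lra.
lra.
Qed.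

Lemma hoeffding_lemma (l : R) : 0 <= l -> 1 - p + p * expR l <= expR (p * l + 8^-1 * (l * l)).
Proof.
move=> l0; rewrite -ler_ln ?posrE ?expR_gt0 ?(D_gt0 l) // expRK.
exact: lnD_le.
Qed.

End Hoeff.

Set Implicit Arguments.


Section Ent.
Variable R : realType.

Lemma ln_le_sub1 (z : R) : 0 < z -> ln z <= z - 1.
Proof.
move=> z0; have h := @le_ln1Dx R (z - 1).
have e : 1 + (z - 1) = z by ring.
rewrite e in h; apply: h; lra.
Qed.

Lemma gibbs_term (x y : R) : 0 <= x -> 0 <= y -> (0 < x -> 0 < y) ->
  x * ln y - x * ln x <= y - x.
Proof.
move=> x0 y0 xy; have [->|xn0] := eqVneq x 0; first by rewrite !mul0r subrr subr0.
have xp : 0 < x by rewrite lt_neqAle eq_sym xn0.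
have yp := xy xp.
rewrite -mulrBr -ln_div ?posrE //.
have h := ln_le_sub1 (divr_gt0 yp xp).
have : x * ln (y / x) <= x * (y / x - 1) by rewrite ler_pM2l.
by rewrite mulrBr mulr1 mulrCA divff ?mulr1 // lt0r_neq0.
Qed.

Lemma gibbs (A : finType) (x y : A -> R) : (forall a, 0 <= x a) -> (forall a, 0 <= y a) ->
  (forall a, 0 < x a -> 0 < y a) -> \sum_a y a <= \sum_a x a ->
  \sum_a x a * ln (y a) <= \sum_a x a * ln (x a).
Proof.
move=> x0 y0 xy syx.
have h1 : \sum_a (x a * ln (y a) - x a * ln (x a)) <= \sum_a (y a - x a).
  by apply: ler_sum => a _; apply: gibbs_term; [exact: x0|exact: y0|exact: xy].
rewrite !sumrB in h1; lra.
Qed.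

Lemma xlnx_le (a b : R) : 0 <= a -> a <= b -> a * ln a <= a * ln b.
Proof.
move=> a0 ab; have [->|an0] := eqVneq a 0; first by rewrite !mul0r.
have ap : 0 < a by rewrite lt_neqAle eq_sym an0.
rewrite ler_pM2l // ler_ln ?posrE //; exact: lt_le_trans ab.
Qed.

Lemma xlnx_add (a b : R) : 0 <= a -> 0 <= b ->
  a * ln a + b * ln b <= (a + b) * ln (a + b).
Proof.
move=> a0 b0; rewrite mulrDl; apply: lerD; apply: xlnx_le => //.
  by rewrite lerDl.
by rewrite lerDr.
Qed.

Lemma pos_of (x : R) : 0 <= x -> x != 0 -> 0 < x.
Proof. by move=> x0 xn; rewrite lt0r xn x0. Qed.

Lemma le_sum1 (A : finType) (f : A -> R) a : (forall a, 0 <= f a) -> f a <= \sum_a f a.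
Proof.
move=> f0; rewrite (bigD1 a) //= lerDl; exact: sumr_ge0.
Qed.

Definition Hn (A : finType) (P : A -> R) := - \sum_a P a * ln (P a).
Definition hn (x : R) := - (x * ln x) - (1 - x) * ln (1 - x).

Definition isd (A : finType) (P : A -> R) := (forall a, 0 <= P a) /\ \sum_a P a = 1.

Lemma ent_cont (A : finType) (P Q : A -> R) : isd P -> isd Q ->
  Hn P - Hn Q <= hn ((\sum_a `|P a - Q a|) / 2)
     + (\sum_a `|P a - Q a|) / 2 * ln (#|A|%:R - 1).
Proof.
move=> [P0 P1] [Q0 Q1].
set d := (\sum_a `|P a - Q a|) / 2.
pose m a := Num.min (P a) (Q a).
pose s a := P a - m a.
pose r a := Q a - m a.
have m0 a : 0 <= m a by rewrite /m le_min P0 Q0.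
have s0 a : 0 <= s a by rewrite /s subr_ge0 ge_min lexx.
have r0 a : 0 <= r a by rewrite /r subr_ge0 ge_min lexx orbT.
have sr a : s a * r a = 0.
  rewrite /s /r /m /=; case: (leP (P a) (Q a)) => h.
  - by rewrite subrr mul0r.
  - by rewrite subrr mulr0.
have absE a : `|P a - Q a| = s a + r a.
  rewrite /s /r /m /=; case: (leP (P a) (Q a)) => h.
  - by rewrite subrr add0r distrC ger0_norm // subr_ge0.
  - by rewrite subrr addr0 ger0_norm // subr_ge0 ltW.
have Ps a : P a = m a + s a by rewrite /s addrC subrK.
have Qr a : Q a = m a + r a by rewrite /r addrC subrK.
have sumS : \sum_a s a = d.
  have e1 : \sum_a s a - \sum_a r a = 0.
    rewrite -sumrB; under eq_bigr => a _ do rewrite /s /r opprB addrA subrK.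
    by rewrite sumrB P1 Q1 subrr.
  have e2 : \sum_a `|P a - Q a| = \sum_a s a + \sum_a r a.
    by rewrite -big_split; apply: eq_bigr => a _; rewrite absE.
  rewrite /d e2; lra.
have sumR : \sum_a r a = d.
  have e1 : \sum_a s a - \sum_a r a = 0.
    rewrite -sumrB; under eq_bigr => a _ do rewrite /s /r opprB addrA subrK.
    by rewrite sumrB P1 Q1 subrr.
  lra.
have sumM : \sum_a m a = 1 - d.
  rewrite -P1 -sumS -sumrB; apply: eq_bigr => a _; rewrite /s; lra.
have d0 : 0 <= d by rewrite -sumS; exact: sumr_ge0.
have d1 : d <= 1 by rewrite -Q1 -sumR; apply: ler_sum => a _; rewrite /r; have := m0 a; lra.
have ha : \sum_a m a * ln (m a) + \sum_a s a * ln (s a) <= \sum_a P a * ln (P a).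
  rewrite -big_split; apply: ler_sum => a _; rewrite [P a]Ps; exact: xlnx_add.
have hb : \sum_a m a * ln (Q a) + (1 - d) * ln (1 - d) <= \sum_a m a * ln (m a).
  have g := @gibbs A m (fun a => Q a * (1 - d)) m0
     (fun a => mulr_ge0 (Q0 a) (ltac:(lra) : 0 <= 1 - d)).
  have sup a : 0 < m a -> 0 < Q a /\ 0 < 1 - d.
    move=> ma; split; first by rewrite [Q a]Qr; have := r0 a; lra.
    by rewrite -sumM; apply: lt_le_trans ma (le_sum1 _ m0).
  have {}g := g (fun a ma => let: conj h1 h2 := sup a ma in mulr_gt0 h1 h2).
  rewrite -mulr_suml Q1 mul1r sumM lexx in g.
  have {}g := g isT.
  rewrite -[X in X <= _](_ : \sum_a m a * ln (Q a * (1 - d)) = _) //.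
  have e : (1 - d) * ln (1 - d) = \sum_a m a * ln (1 - d) by rewrite -mulr_suml sumM.
  rewrite e -big_split /=; apply: eq_bigr => a _.
  have [->|ma] := eqVneq (m a) 0; first by rewrite !mul0r addr0.
  have [h1 h2] := sup a (pos_of (m0 a) ma).
  by rewrite lnM ?posrE // mulrDr.
have hc : \sum_a r a * ln (Q a) + d * ln d <= \sum_a r a * ln (r a).
  have g := @gibbs A r (fun a => Q a * d) r0 (fun a => mulr_ge0 (Q0 a) d0).
  have sup a : 0 < r a -> 0 < Q a /\ 0 < d.
    move=> ra; split; first by rewrite [Q a]Qr; have := m0 a; lra.
    by rewrite -sumR; apply: lt_le_trans ra (le_sum1 _ r0).
  have {}g := g (fun a ma => let: conj h1 h2 := sup a ma in mulr_gt0 h1 h2).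
  rewrite -mulr_suml Q1 mul1r sumR lexx in g.
  have {}g := g isT.
  rewrite -[X in X <= _](_ : \sum_a r a * ln (Q a * d) = _) //.
  have e : d * ln d = \sum_a r a * ln d by rewrite -mulr_suml sumR.
  rewrite e -big_split /=; apply: eq_bigr => a _.
  have [->|ra] := eqVneq (r a) 0; first by rewrite !mul0r addr0.
  have [h1 h2] := sup a (pos_of (r0 a) ra).
  by rewrite lnM ?posrE // mulrDr.
have hd : \sum_a r a * ln (r a) <= d * ln d.
  rewrite -sumR mulr_suml; apply: ler_sum => a _; apply: xlnx_le => //.
  exact: le_sum1.
have he : d * ln d - d * ln (#|A|%:R - 1) <= \sum_a s a * ln (s a).
  have [d00|dn0] := eqVneq d 0.
    have sz a : s a = 0.
      by have := @psumr_eq0P R A xpredT s (fun a _ => s0 a); rewrite sumS d00; apply.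
    by rewrite d00 !mul0r subrr big1 // => a _; rewrite sz mul0r.
  have dp : 0 < d by rewrite lt_neqAle eq_sym dn0.
  case: (pickP (fun a => 0 < r a)) => [a0 ra0 | hr]; last first.
    exfalso; move: dn0; rewrite -sumR big1 ?eqxx // => a _.
    by apply/eqP; rewrite eq_le r0 andbT; rewrite leNgt hr.
  case: (pickP (fun a => 0 < s a)) => [a1 sa1 | hs]; last first.
    exfalso; move: dn0; rewrite -sumS big1 ?eqxx // => a _.
    by apply/eqP; rewrite eq_le s0 andbT; rewrite leNgt hs.
  pose B := [set a | 0 < s a].
  pose N := #|B|.
  have sa0 : s a0 = 0.
    by have := sr a0; move/eqP; rewrite mulf_eq0 (gt_eqF ra0) orbF => /eqP.
  have NK : (N.+1 <= #|A|)%N.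
    rewrite -(cardsC B) /N -addn1 leq_add2l; apply/card_gt0P; exists a0.
    by rewrite !inE sa0 ltxx.
  have N1 : (0 < N)%N by apply/card_gt0P; exists a1; rewrite inE.
  have Np : 0 < N%:R :> R by rewrite ltr0n.
  have NKr : N%:R <= #|A|%:R - 1 :> R.
    by rewrite lerBrDr natr1 ler_nat.
  pose y a := if a \in B then d / N%:R else 0.
  have y0 a : 0 <= y a by rewrite /y; case: ifP => // _; rewrite divr_ge0 // ltW.
  have g := @gibbs A s y s0 y0.
  have sup a : 0 < s a -> 0 < y a by move=> sa; rewrite /y inE sa divr_gt0.
  have sy : \sum_a y a = d.
    rewrite /y -big_mkcond /= sumr_const; change (d / N%:R *+ N = d); rewrite -mulr_natr divfK //.
    exact: lt0r_neq0.
  have {g} := g sup; rewrite sy sumS lexx => /(_ isT).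
  rewrite -[X in X <= _ -> _](_ : d * ln d - d * ln N%:R = _); last first.
    have e : d * ln d - d * ln N%:R = \sum_a (s a * ln d - s a * ln N%:R).
      by rewrite sumrB -!mulr_suml sumS.
    rewrite e; apply: eq_bigr => a _.
    rewrite /y; case: ifP => [|aB].
      by rewrite inE => sa; rewrite [ln (d / _)]ln_div ?posrE // mulrBr.
    have -> : s a = 0.
      by apply/eqP; rewrite eq_le s0 andbT leNgt; move: aB; rewrite inE => ->.
    by rewrite !mul0r subrr.
  move=> h; apply: le_trans h; rewrite lerD2l lerN2; apply: (ler_wpM2l d0).
  by rewrite ler_ln ?posrE //; apply: lt_le_trans NKr.
have eQ : \sum_a Q a * ln (Q a) = \sum_a m a * ln (Q a) + \sum_a r a * ln (Q a).
  by rewrite -big_split; apply: eq_bigr => a _ /=; rewrite -mulrDl; congr (_ * _); rewrite /r; ring.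
rewrite /Hn /hn eQ; lra.
Qed.

End Ent.


Section Ent2.
Variable R : realType.

Lemma hn_mono (K d' d : R) : 1 <= K -> 0 <= d' -> d' <= d -> d <= 1 - K^-1 ->
  hn d' + d' * ln (K - 1) <= hn d + d * ln (K - 1).
Proof.
move=> K1 d'0 dd dK.
have [->|ne] := eqVneq d' d; first exact: lexx.
have dlt : d' < d by rewrite lt_neqAle ne dd.
have dp : 0 < d by apply: le_lt_trans dlt.
have K0 : 0 < K by apply: lt_le_trans K1.
have Ki : 0 < K^-1 by rewrite invr_gt0.
have d1 : d < 1 by lra.
have g1 := @gibbs_term R (1 - d') (1 - d) (ltac:(lra)) (ltac:(lra)) (fun _ => ltac:(lra)).
have g2 := @gibbs_term R d' d d'0 (ltW dp) (fun _ => dp).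
have Kg1 : 1 < K.
  rewrite lt_neqAle K1 andbT; apply/negP => /eqP K1'.
  by move: dK; rewrite -K1' invr1 subrr; lra.
have hL : ln d <= ln (1 - d) + ln (K - 1).
  rewrite -lnM ?posrE; [|lra|lra].
  rewrite ler_ln ?posrE; [|lra|apply: mulr_gt0; lra].
  have : d * K <= K - 1.
    have := ler_wpM2r (ltW K0) dK; rewrite mulrBl mul1r mulVf ?lt0r_neq0 //.
  nra.
have : 0 <= (d - d') * (ln (1 - d) + ln (K - 1) - ln d).
  apply: mulr_ge0; lra.
rewrite /hn; nra.
Qed.

Variables T Y : finType.
Implicit Types Q : T -> Y -> R.

Definition QT Q (t : T) := \sum_y Q t y.
Definition QY Q (y : Y) := \sum_t Q t y.
Definition QJ Q (p : T * Y) := Q p.1 p.2.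
Definition MIn Q := Hn (QT Q) + Hn (QY Q) - Hn (QJ Q).

Definition isd2 Q := (forall t y, 0 <= Q t y) /\ \sum_t \sum_y Q t y = 1.

Lemma QT_ge Q t y : (forall t y, 0 <= Q t y) -> Q t y <= QT Q t.
Proof. by move=> Q0; rewrite /QT; apply: (@le_sum1 _ _ (fun y => Q t y)) => y1. Qed.

Lemma QY_ge Q t y : (forall t y, 0 <= Q t y) -> Q t y <= QY Q y.
Proof. by move=> Q0; rewrite /QY; apply: (@le_sum1 _ _ (fun t => Q t y)) => t1. Qed.

Lemma isd_QT Q : isd2 Q -> isd (QT Q).
Proof.
move=> [Q0 Q1]; split; last by rewrite /QT.
by move=> t; apply: sumr_ge0 => y _.
Qed.

Lemma isd_QY Q : isd2 Q -> isd (QY Q).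
Proof.
move=> [Q0 Q1]; split; last by rewrite /QY -exchange_big.
by move=> y; apply: sumr_ge0 => t _.
Qed.

Lemma isd_QJ Q : isd2 Q -> isd (QJ Q).
Proof.
move=> [Q0 Q1]; split; first by move=> p; apply: Q0.
by rewrite /QJ -(pair_bigA _ (fun t y => Q t y)).
Qed.

Lemma sumQT Q (F : T -> R) : \sum_p QJ Q p * F p.1 = \sum_t QT Q t * F t.
Proof.
rewrite /QJ -(pair_bigA _ (fun t y => Q t y * F t)) /=.
by apply: eq_bigr => t _; rewrite /QT mulr_suml.
Qed.

Lemma sumQY Q (F : Y -> R) : \sum_p QJ Q p * F p.2 = \sum_y QY Q y * F y.
Proof.
rewrite /QJ -(pair_bigA _ (fun t y => Q t y * F y)) /= exchange_big.
by apply: eq_bigr => y _; rewrite /QY mulr_suml.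
Qed.

Lemma mi_ge0 Q : isd2 Q -> 0 <= MIn Q.
Proof.
move=> hQ; have [Q0 Q1] := hQ.
have g := @gibbs R _ (QJ Q) (fun p => QT Q p.1 * QY Q p.2) (fun p => Q0 _ _)
  (fun p => mulr_ge0 (sumr_ge0 _ (fun y _ => Q0 _ _)) (sumr_ge0 _ (fun t _ => Q0 _ _))).
have sup p : 0 < QJ Q p -> 0 < QT Q p.1 /\ 0 < QY Q p.2.
  move=> h; split; apply: lt_le_trans h _; [exact: QT_ge | exact: QY_ge].
have {}g := g (fun p h => let: conj a b := sup p h in mulr_gt0 a b).
have e1 : \sum_p QT Q p.1 * QY Q p.2 = 1.
  rewrite -(pair_bigA _ (fun t y => QT Q t * QY Q y)) /=.
  under eq_bigr => t _ do rewrite -mulr_sumr.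
  by rewrite -mulr_suml; have [_ ->] := isd_QT hQ; have [_ ->] := isd_QY hQ; rewrite mul1r.
have e2 : \sum_p QJ Q p = 1 by have [_ ->] := isd_QJ hQ.
rewrite e1 e2 lexx in g; have {}g := g isT.
have e3 : \sum_p QJ Q p * ln (QT Q p.1 * QY Q p.2) =
   \sum_p QJ Q p * ln (QT Q p.1) + \sum_p QJ Q p * ln (QY Q p.2).
  rewrite -big_split; apply: eq_bigr => p _ /=.
  have [->|ne] := eqVneq (QJ Q p) 0; first by rewrite !mul0r addr0.
  have [a b] := sup p (pos_of (Q0 _ _) ne).
  by rewrite lnM ?posrE // mulrDr.
rewrite e3 (sumQT Q (fun t => ln (QT Q t))) (sumQY Q (fun y => ln (QY Q y))) in g.
rewrite /MIn /Hn; lra.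
Qed.

Lemma HJ_geT Q : isd2 Q -> Hn (QT Q) <= Hn (QJ Q).
Proof.
move=> [Q0 Q1]; rewrite /Hn lerN2 -(sumQT Q (fun t => ln (QT Q t))).
apply: ler_sum => p _; apply: xlnx_le; first exact: Q0.
exact: QT_ge.
Qed.

Lemma HJ_geY Q : isd2 Q -> Hn (QY Q) <= Hn (QJ Q).
Proof.
move=> [Q0 Q1]; rewrite /Hn lerN2 -(sumQY Q (fun y => ln (QY Q y))).
apply: ler_sum => p _; apply: xlnx_le; first exact: Q0.
exact: QY_ge.
Qed.

Lemma Hn_le (A : finType) (P : A -> R) : isd P -> Hn P <= ln #|A|%:R.
Proof.
move=> [P0 P1].
have KA : (0 < #|A|)%N.
  rewrite lt0n; apply/negP => /eqP/card0_eq h.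
  by move: P1; rewrite big_pred0 // => /eqP; rewrite eq_sym oner_eq0.
have Kp : 0 < #|A|%:R :> R by rewrite ltr0n.
have Ki : 0 < #|A|%:R^-1 :> R by rewrite invr_gt0.
have g := @gibbs R A P (fun _ => #|A|%:R^-1) P0 (fun _ => ltW Ki)
  (fun _ _ => Ki).
have sK : \sum_(a : A) (#|A|%:R^-1 : R) = 1.
  by rewrite sumr_const; change (#|A|%:R^-1 *+ #|A| = 1 :> R); rewrite -(mulr_natr (#|A|%:R^-1)) mulVf ?lt0r_neq0.
rewrite /= sK P1 lexx in g.
have {}g := g isT.
rewrite -mulr_suml P1 mul1r lnV ?posrE // in g.
rewrite /Hn; lra.
Qed.

Lemma mi_leT Q : isd2 Q -> MIn Q <= ln #|T|%:R.
Proof.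
move=> hQ; have := HJ_geY hQ; have := Hn_le (isd_QT hQ); rewrite /MIn; lra.
Qed.

Lemma mi_leY Q : isd2 Q -> MIn Q <= ln #|Y|%:R.
Proof.
move=> hQ; have := HJ_geT hQ; have := Hn_le (isd_QY hQ); rewrite /MIn; lra.
Qed.

Lemma tv_T Q1 Q2 : \sum_t `|QT Q1 t - QT Q2 t| <= \sum_p `|QJ Q1 p - QJ Q2 p|.
Proof.
rewrite /QJ -(pair_bigA _ (fun t y => `|Q1 t y - Q2 t y|)) /=.
apply: ler_sum => t _; rewrite /QT -sumrB; exact: ler_norm_sum.
Qed.

Lemma tv_Y Q1 Q2 : \sum_y `|QY Q1 y - QY Q2 y| <= \sum_p `|QJ Q1 p - QJ Q2 p|.
Proof.
rewrite /QJ -(pair_bigA _ (fun t y => `|Q1 t y - Q2 t y|)) /= exchange_big.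
apply: ler_sum => y _; rewrite /QY -sumrB; exact: ler_norm_sum.
Qed.

End Ent2.


Section Key.
Variable R : realType.

Lemma card_pos_isd (A : finType) (P : A -> R) : isd P -> (0 < #|A|)%N.
Proof.
move=> [P0 P1]; rewrite lt0n; apply/negP => /eqP/card0_eq h.
by move: P1; rewrite big_pred0 // => /eqP; rewrite eq_sym oner_eq0.
Qed.

Lemma hn_ge0 (x : R) : 0 <= x -> x <= 1 -> 0 <= hn x.
Proof.
move=> x0 x1; rewrite /hn.
have a : x * ln x <= 0 by apply: mulr_ge0_le0 => //; exact: ln_le0.
have b : (1 - x) * ln (1 - x) <= 0.
  apply: mulr_ge0_le0; first lra; apply: ln_le0; lra.
lra.
Qed.

Variables T Y : finType.

Definition DIn (th : R) :=
  if th <= 2 - 2 / #|T|%:R then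
    th / 2 * ln ((#|T|%:R * #|Y|%:R - 1) * (#|T|%:R - 1) * (#|Y|%:R - 1)) + 3 * hn (th / 2)
  else ln #|T|%:R.

Lemma key_ln (Q1 Q2 : T -> Y -> R) th : isd2 Q1 -> isd2 Q2 -> 0 <= th ->
  \sum_p `|QJ Q1 p - QJ Q2 p| <= th -> MIn Q1 - MIn Q2 <= DIn th.
Proof.
move=> h1 h2 th0 hth.
have cT := card_pos_isd (isd_QT h1).
have cY := card_pos_isd (isd_QY h1).
have T1 : 1 <= #|T|%:R :> R by rewrite ler1n.
have Y1 : 1 <= #|Y|%:R :> R by rewrite ler1n.
have m1 := mi_ge0 h1; have m2 := mi_ge0 h2.
rewrite /DIn; case: ifP => hc; last first.
  have := mi_leT h1; lra.
have Tp : 0 < #|T|%:R :> R by lra.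
have Yp : 0 < #|Y|%:R :> R by lra.
have Ti0 : 0 < #|T|%:R^-1 :> R by rewrite invr_gt0.
have Yi0 : 0 < #|Y|%:R^-1 :> R by rewrite invr_gt0.
have d1 : th / 2 <= 1 - #|T|%:R^-1.
  by move: hc; rewrite mulrC; lra.
have d0 : 0 <= th / 2 by lra.
have hd := hn_ge0 d0 (ltac:(lra) : th / 2 <= 1).
have [eT|neT] := eqVneq #|T| 1%N.
  have := mi_leT h1; rewrite eT ln1 subrr mulr0 mul0r ln0 // mulr0 add0r.
  lra.
have [eY|neY] := eqVneq #|Y| 1%N.
  have := mi_leY h1; rewrite eY ln1 subrr mulr0 ln0 // mulr0 add0r.
  lra.
have T2 : 2 <= #|T|%:R :> R.
  by rewrite ler_nat ltn_neqAle eq_sym neT cT.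
have Y2 : 2 <= #|Y|%:R :> R.
  by rewrite ler_nat ltn_neqAle eq_sym neY cY.
have [dY|dY] := leP (th / 2) (1 - #|Y|%:R^-1).
-
  have tT := tv_T Q1 Q2; have tY := tv_Y Q1 Q2.
  have eT := ent_cont (isd_QT h1) (isd_QT h2).
  have eY := ent_cont (isd_QY h1) (isd_QY h2).
  have eJ := ent_cont (isd_QJ h2) (isd_QJ h1).
  have dJ : \sum_p `|QJ Q2 p - QJ Q1 p| = \sum_p `|QJ Q1 p - QJ Q2 p|.
    by apply: eq_bigr => p _; rewrite distrC.
  rewrite dJ card_prod natrM in eJ.
  have mT := @hn_mono R #|T|%:R ((\sum_t `|QT Q1 t - QT Q2 t|) / 2) (th / 2) T1
     (divr_ge0 (sumr_ge0 _ (fun _ _ => normr_ge0 _)) (ler0n _ 2)) (ltac:(lra)) d1.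
  have mY := @hn_mono R #|Y|%:R ((\sum_y `|QY Q1 y - QY Q2 y|) / 2) (th / 2) Y1
     (divr_ge0 (sumr_ge0 _ (fun _ _ => normr_ge0 _)) (ler0n _ 2)) (ltac:(lra)) dY.
  have TY1 : 1 <= #|T|%:R * #|Y|%:R :> R by nra.
  have dTY : th / 2 <= 1 - (#|T|%:R * #|Y|%:R)^-1.
    apply: le_trans d1 _; rewrite lerD2l lerN2 invfM.
    rewrite ler_piMr //; last by rewrite invf_le1.
  have mJ := @hn_mono R (#|T|%:R * #|Y|%:R) ((\sum_p `|QJ Q1 p - QJ Q2 p|) / 2) (th / 2) TY1
     (divr_ge0 (sumr_ge0 _ (fun _ _ => normr_ge0 _)) (ler0n _ 2)) (ltac:(lra)) dTY.
  rewrite lnM ?posrE; [|nra|lra]; rewrite lnM ?posrE; [|nra|lra].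
  idtac.
  move: eT eY eJ mT mY mJ; rewrite /MIn; lra.
-
  have YT : #|Y|%:R < #|T|%:R :> R.
    have : #|T|%:R^-1 < #|Y|%:R^-1 :> R by lra.
    by rewrite ltf_pV2 ?posrE.
  have YT1 : #|Y|%:R + 1 <= #|T|%:R :> R.
    by rewrite natr1 ler_nat; move: YT; rewrite ltr_nat.
  set P := ((#|T|%:R * #|Y|%:R - 1) * (#|T|%:R - 1) * (#|Y|%:R - 1) : R).
  have q1 : #|Y|%:R * #|Y|%:R <= #|T|%:R * #|Y|%:R - 1 :> R by nra.
  have q2 : 1 <= (#|T|%:R - 1) * (#|Y|%:R - 1) :> R by nra.
  have eP : P = (#|T|%:R * #|Y|%:R - 1) * ((#|T|%:R - 1) * (#|Y|%:R - 1)).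
    by rewrite /P; ring.
  have PY : #|Y|%:R * #|Y|%:R <= P.
    rewrite eP -[X in X <= _]mulr1; apply: ler_pM => //; nra.
  have YY1 : 1 <= #|Y|%:R * #|Y|%:R :> R by nra.
  have lP : ln (#|Y|%:R * #|Y|%:R) <= ln P.
    by rewrite ler_ln ?posrE //; lra.
  rewrite lnM ?posrE // in lP.
  have LP0 : 0 <= ln P by apply: ln_ge0; lra.
  have dh : 2^-1 <= th / 2.
    have : #|Y|%:R^-1 <= 2^-1 :> R by rewrite lef_pV2 ?posrE.
    lra.
  have : 0 <= (th / 2 - 2^-1) * ln P by apply: mulr_ge0; lra.
  have := mi_leY h1.
  nra.
Qed.

End Key.


Section Conv.
Variable R : realType.
Variables T Y : finType.

Lemma mutinf_conv (b : R) (Q : T -> Y -> R) : (forall t y, 0 <= Q t y) ->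
  mutinf b Q = MIn Q / ln b.
Proof.
move=> Q0.
rewrite /mutinf /MIn /Hn.
have e1 : forall t y, (if Q t y == 0 then 0 else
      Q t y * logb b (Q t y / ((\sum_(y' : Y) Q t y') * (\sum_(t' : T) Q t' y))))
    = (Q t y * ln (Q t y) - Q t y * ln (QT Q t) - Q t y * ln (QY Q y)) / ln b.
  move=> t y; case: ifP => [/eqP ->|/negbT ne]; first by rewrite !mul0r !subr0 mul0r.
  have qp := pos_of (Q0 t y) ne.
  have qt : 0 < QT Q t by apply: lt_le_trans qp (QT_ge _ _ Q0).
  have qy : 0 < QY Q y by apply: lt_le_trans qp (QY_ge _ _ Q0).
  rewrite /logb -/(QT Q t) -/(QY Q y) ln_div ?posrE ?mulr_gt0 // lnM ?posrE //.
  rewrite mulrA; congr (_ / _); ring.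
under eq_bigr => t _ do under eq_bigr => y _ do rewrite e1.
under eq_bigr => t _ do rewrite -mulr_suml.
rewrite -mulr_suml; congr (_ / _).
rewrite (pair_bigA _ (fun t y => Q t y * ln (Q t y) - Q t y * ln (QT Q t) - Q t y * ln (QY Q y))) /=.
rewrite !sumrB /QJ.
rewrite (sumQT Q (fun t => ln (QT Q t))) (sumQY Q (fun y => ln (QY Q y))) /QJ.
ring.
Qed.

Lemma deltaI_conv (b th : R) : DeltaI b T Y th = DIn T Y th / ln b.
Proof.
rewrite /DeltaI /DIn /hbin /logb /hn; case: ifP => _ //.
rewrite mulrA; lra.
Qed.

End Conv.


Section Prob.
Variable R : realType.
Variable A : finType.
Variable pi : A -> R.
Hypothesis pi0 : forall a, 0 <= pi a.
Hypothesis pi1 : \sum_a pi a = 1.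

Lemma sum_prod_ffun n (G : A -> R) :
  \sum_(s : {ffun 'I_n -> A}) \prod_i G (s i) = (\sum_a G a) ^+ n.
Proof.
rewrite -(bigA_distr_bigA (fun (i : 'I_n) a => G a)) /=.
by rewrite prodr_const card_ord.
Qed.

Lemma hoeff n (f : A -> bool) (t : R) : (0 < n)%N -> 0 <= t ->
  \sum_(s : {ffun 'I_n -> A} |
      t < (\sum_i (f (s i))%:R) / n%:R - \sum_a pi a * (f a)%:R)
     \prod_i pi (s i) <= expR (- (2 * n%:R * (t * t))).
Proof.
move=> n0 t0.
set p := \sum_a pi a * (f a)%:R.
have p0 : 0 <= p by apply: sumr_ge0 => a _; apply: mulr_ge0 => //; exact: ler0n.
have p1 : p <= 1.
  rewrite -pi1; apply: ler_sum => a _; case: (f a); rewrite ?mulr1 ?mulr0 //.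
have np : 0 < n%:R :> R by rewrite ltr0n.
set l := 4 * t.
have l0 : 0 <= l by rewrite /l; lra.
pose S (s : {ffun 'I_n -> A}) := \sum_i ((f (s i))%:R : R).
pose E (s : {ffun 'I_n -> A}) := expR (l * (S s - n%:R * p - n%:R * t)).
have step1 : \sum_(s : {ffun 'I_n -> A} | t < S s / n%:R - p) \prod_i pi (s i)
    <= \sum_(s : {ffun 'I_n -> A}) \prod_i pi (s i) * E s.
  rewrite [X in _ <= X](bigID (fun s => t < S s / n%:R - p)) /=.
  rewrite -[X in X <= _]addr0; apply: lerD; last first.
    apply: sumr_ge0 => s _; apply: mulr_ge0; last exact: expR_ge0.
    by apply: prodr_ge0 => i _.
  apply: ler_sum => s hs.
  rewrite -[X in X <= _]mulr1; apply: ler_wpM2l; first by apply: prodr_ge0 => i _.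
  rewrite /E; apply: le_trans (expR_ge1Dx _); rewrite lerDl; apply: mulr_ge0 => //.
  have : n%:R * t < S s - n%:R * p.
    move: hs; rewrite ltrBrDr ltr_pdivlMr // => h.
    lra.
  lra.
apply: le_trans step1 _.
have eE (s : {ffun 'I_n -> A}) : \prod_i pi (s i) * E s =
    expR (- (l * (n%:R * p + n%:R * t))) * \prod_i (pi (s i) * expR (l * (f (s i))%:R)).
  rewrite big_split /= mulrCA; congr (_ * _).
  rewrite /E -expR_sum -expRD; congr expR.
  rewrite /S -mulr_sumr; ring.
under eq_bigr => s _ do rewrite eE.
rewrite -mulr_sumr (sum_prod_ffun n (fun a => pi a * expR (l * (f a)%:R))).
have eD : \sum_a pi a * expR (l * (f a)%:R) = 1 - p + p * expR l.
  transitivity (\sum_a (pi a + (expR l - 1) * (pi a * (f a)%:R))).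
    apply: eq_bigr => a _; case: (f a); rewrite /= ?mulr1 ?mulr0 ?expR0; ring.
  rewrite big_split /= -mulr_sumr pi1 -/p; ring.
rewrite eD.
have hl := @hoeffding_lemma R p p0 p1 l l0.
have D0 : 0 <= 1 - p + p * expR l by have := expR_ge0 l; nra.
have h : (1 - p + p * expR l) ^+ n <= expR (p * l + 8^-1 * (l * l)) ^+ n.
  by apply: lerXn2r => //; rewrite nnegrE ?expR_ge0.
rewrite -expRM_natl in h.
apply: le_trans (ler_wpM2l (expR_ge0 _) h) _.
rewrite -expRD ler_expR /l; lra.
Qed.

End Prob.


Section Model.
Variable R : realType.
Variables X Y T : finType.
Variable PXY : X -> Y -> R.
Variable W : X -> T -> R.
Variable n : nat.
Hypothesis n0 : (0 < n)%N.
Hypothesis hP : is_dist (fun xy : X * Y => PXY xy.1 xy.2).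
Hypothesis hW : is_channel W.

Definition piA (a : X * Y * T) : R := PXY a.1.1 a.1.2 * W a.1.1 a.2.
Definition gA (a : X * Y * T) : T * Y := (a.2, a.1.2).

Lemma piA0 a : 0 <= piA a.
Proof.
rewrite /piA; apply: mulr_ge0; first exact: (hP.1 (a.1.1, a.1.2)).
exact: ((hW a.1.1).1 a.2).
Qed.

Lemma piA1 : \sum_a piA a = 1.
Proof.
rewrite -(pair_bigA _ (fun xy t => piA (xy, t))) /=.
rewrite -hP.2; apply: eq_bigr => xy _.
by rewrite /piA /= -mulr_sumr (hW xy.1).2 mulr1.
Qed.

Lemma sum_eq_in (I : finType) (B : {set I}) x :
  \sum_(p in B) ((x == p)%:R : R) = (x \in B)%:R.
Proof.
case: (boolP (x \in B)) => xB.
  rewrite (bigD1 x) //= eqxx big1 ?addr0 // => p /andP[_ /negbTE].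
  by rewrite eq_sym => ->.
by rewrite big1 // => p pB; case: eqP => // e; move: xB; rewrite e pB.
Qed.

Lemma sum_delta (I : finType) (F : I -> R) j : \sum_i F i * ((i == j)%:R) = F j.
Proof.
rewrite (bigD1 j) //= eqxx mulr1 big1 ?addr0 // => i /negbTE ->; exact: mulr0.
Qed.

Lemma emp_cnt (s : {ffun 'I_n -> X * Y * T}) t y :
  emp_TY R s t y = (\sum_i ((gA (s i) == (t, y))%:R : R)) / n%:R.
Proof.
rewrite /emp_TY; congr (_ / _).
rewrite -sum1_card natr_sum big_mkcond /=; apply: eq_bigr => i _.
by rewrite inE /gA xpair_eqE; case: (_ && _).
Qed.

Lemma empA (s : {ffun 'I_n -> X * Y * T}) (B : {set T * Y}) :
  \sum_(p in B) emp_TY R s p.1 p.2 = (\sum_i ((gA (s i) \in B)%:R : R)) / n%:R.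
Proof.
under eq_bigr => p _ do rewrite emp_cnt.
rewrite -mulr_suml exchange_big /=; congr (_ / _).
apply: eq_bigr => i _; exact: sum_eq_in.
Qed.

Lemma joint_cnt t y : joint_TY PXY W t y = \sum_a piA a * ((gA a == (t, y))%:R).
Proof.
rewrite -(pair_bigA _ (fun xy t' => piA (xy, t') * ((gA (xy, t') == (t, y))%:R))) /=.
rewrite -(pair_bigA _ (fun x y' => \sum_t' piA ((x, y'), t') * ((gA ((x, y'), t') == (t, y))%:R))) /=.
rewrite /joint_TY; apply: eq_bigr => x _.
transitivity (\sum_y' (PXY x y' * W x t) * ((y' == y)%:R)); first by rewrite sum_delta.
apply: eq_bigr => y' _.
rewrite -(sum_delta (fun t' => PXY x y' * W x t') t) mulr_suml.
apply: eq_bigr => t' _; rewrite /piA /gA /= xpair_eqE.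
by case: (t' == t); case: (y' == y); rewrite /= ?mulr1 ?mulr0 ?mul0r.
Qed.

Lemma trueA (B : {set T * Y}) :
  \sum_(p in B) joint_TY PXY W p.1 p.2 = \sum_a piA a * ((gA a \in B)%:R).
Proof.
under eq_bigr => p _ do rewrite joint_cnt.
rewrite exchange_big /=; apply: eq_bigr => a _.
by rewrite -mulr_sumr sum_eq_in.
Qed.

Lemma sum_setT (I : finType) (F : I -> R) : \sum_(p in [set: I]) F p = \sum_p F p.
Proof. by apply: eq_bigl => p; rewrite inE. Qed.

Lemma isd2_emp (s : {ffun 'I_n -> X * Y * T}) : isd2 (emp_TY R s).
Proof.
split.
  move=> t y; rewrite emp_cnt; apply: divr_ge0; last exact: ler0n.
  by apply: sumr_ge0 => i _; exact: ler0n.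
rewrite (pair_bigA _ (fun t y => emp_TY R s t y)) -sum_setT empA /=.
under eq_bigr => i _ do rewrite inE.
by rewrite sumr_const card_ord -mulr_natr mul1r divff // pnatr_eq0 -lt0n.
Qed.

Lemma isd2_joint : isd2 (joint_TY PXY W).
Proof.
split.
  move=> t y; apply: sumr_ge0 => x _; apply: mulr_ge0.
    exact: (hP.1 (x, y)).
  exact: ((hW x).1 t).
rewrite (pair_bigA _ (fun t y => joint_TY PXY W t y)) -sum_setT trueA /=.
under eq_bigr => a _ do rewrite inE mulr1.
exact: piA1.
Qed.

End Model.


Section Weiss.
Variable R : realType.
Variables X Y T : finType.
Variable PXY : X -> Y -> R.
Variable W : X -> T -> R.
Variable n : nat.
Hypothesis n0 : (0 < n)%N.
Hypothesis hP : is_dist (fun xy : X * Y => PXY xy.1 xy.2).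
Hypothesis hW : is_channel W.

Definition L1 (s : {ffun 'I_n -> X * Y * T}) :=
  \sum_p `|QJ (emp_TY R s) p - QJ (joint_TY PXY W) p|.

Lemma sum_pred_le (I : finType) (P Q : pred I) (F : I -> R) :
  (forall i, P i -> Q i) -> (forall i, 0 <= F i) ->
  \sum_(i | P i) F i <= \sum_(i | Q i) F i.
Proof.
move=> PQ F0; rewrite [X in _ <= X]big_mkcond [X in X <= _]big_mkcond /=.
apply: ler_sum => i _; case: ifP => [/PQ -> //|_]; case: ifP => // _.
Qed.

Lemma count_sets (c : R) : (0 < #|T|)%N -> (0 < #|Y|)%N ->
  \sum_(B : {set T * Y} | (B != finset.set0) && (B != finset.setT)) c = c * (2 ^+ (#|T| * #|Y|) - 2).
Proof.
move=> cT cY.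
have [t0 _] := card_gt0P cT; have [y0 _] := card_gt0P cY.
have hST : [set: T * Y] != finset.set0.
  by apply/set0Pn; exists (t0, y0); rewrite inE.
have e1 : \sum_(B : {set T * Y}) c = c + \sum_(B : {set T * Y} | B != finset.set0) c.
  by rewrite (bigD1 finset.set0).
have e2 : \sum_(B : {set T * Y} | B != finset.set0) c =
   c + \sum_(B : {set T * Y} | (B != finset.set0) && (B != finset.setT)) c.
  by rewrite (bigD1 finset.setT) //= eq_sym.
have e3 : \sum_(B : {set T * Y}) c = c * (2 ^+ (#|T| * #|Y|)).
  rewrite (eq_bigl (fun B => B \in powerset [set: T * Y])); last first.
    by move=> B; rewrite powersetE finset.subsetT.
  rewrite sumr_const card_powerset cardsT card_prod -(mulr_natr c) natrX.
  by [].
have h := e1; rewrite e2 e3 in h.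
by rewrite mulrBr h; ring.
Qed.

Lemma weiss (th : R) : 0 <= th -> (0 < #|T|)%N -> (0 < #|Y|)%N ->
  \sum_(s : {ffun 'I_n -> X * Y * T} | th < L1 s) \prod_i piA PXY W (s i)
    <= (2 ^+ (#|T| * #|Y|) - 2) * expR (- (n%:R * (th * th) / 2)).
Proof.
move=> th0 cT cY.
set Qt := joint_TY PXY W.
pose D (s : {ffun 'I_n -> X * Y * T}) (B : {set T * Y}) :=
  (\sum_i ((gA (s i) \in B)%:R : R)) / n%:R - \sum_a piA PXY W a * ((gA a \in B)%:R).
have DE s (B : {set T * Y}) : \sum_(p in B) (emp_TY R s p.1 p.2 - Qt p.1 p.2) = D s B.
  by rewrite sumrB empA // trueA.
have tot1 (s : {ffun 'I_n -> X * Y * T}) : \sum_p emp_TY R s p.1 p.2 = 1.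
  by have [_ h] := isd2_emp R n0 s; rewrite -h (pair_bigA _ (fun t y => emp_TY R s t y)).
have tot2 : \sum_p Qt p.1 p.2 = 1.
  by have [_ h] := isd2_joint hP hW; rewrite -h (pair_bigA _ (fun t y => Qt t y)).
have D0 (s : {ffun 'I_n -> X * Y * T}) : D s finset.set0 = 0 by rewrite -DE big_set0.
have DT (s : {ffun 'I_n -> X * Y * T}) : D s finset.setT = 0 by rewrite -DE sum_setT sumrB tot1 tot2 subrr.
have keyB (s : {ffun 'I_n -> X * Y * T}) : th < L1 s -> th / 2 < D s [set p | Qt p.1 p.2 < emp_TY R s p.1 p.2].
  move=> hL; set B := [set p | _].
  pose d p := emp_TY R s p.1 p.2 - Qt p.1 p.2.
  have eL : L1 s = \sum_(p in B) d p - \sum_(p | p \notin B) d p.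
    rewrite /L1 /QJ (bigID (fun p => p \in B)) /= -sumrN.
    congr (_ + _); apply: eq_bigr => p; rewrite inE.
      by move=> h; rewrite ger0_norm // subr_ge0 ltW.
    by move=> /negbTE h; rewrite ler0_norm // subr_le0 leNgt h.
  have eS : \sum_(p in B) d p + \sum_(p | p \notin B) d p = 0.
    have h : \sum_p d p = 0 by rewrite /d sumrB tot1 tot2 subrr.
    by rewrite (bigID (fun p => p \in B)) /= in h.
  rewrite -DE -/(\sum_(p in B) d p); lra.
have step1 : \sum_(s : {ffun 'I_n -> X * Y * T} | th < L1 s) \prod_i piA PXY W (s i)
   <= \sum_(s : {ffun 'I_n -> X * Y * T})
        \sum_(B : {set T * Y} | (B != finset.set0) && (B != finset.setT))
          (\prod_i piA PXY W (s i)) * (((th / 2 < D s B)%R : bool)%:R).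
  rewrite [X in _ <= X](bigID (fun s => th < L1 s)) /=.
  have pr0 (s : {ffun 'I_n -> X * Y * T}) : 0 <= \prod_i piA PXY W (s i) by apply: prodr_ge0 => i _; exact: piA0.
  rewrite -[X in X <= _]addr0; apply: lerD; last first.
    apply: sumr_ge0 => s _; apply: sumr_ge0 => B _; apply: mulr_ge0 => //; exact: ler0n.
  apply: ler_sum => s hs.
  have kB := keyB s hs.
  set B0 := [set p | _] in kB.
  have nB0 : (B0 != finset.set0) && (B0 != finset.setT).
    apply/andP; split; apply/eqP => e; move: kB; rewrite e ?D0 ?DT; lra.
  rewrite (bigD1 B0) //= kB mulr1 lerDl.
  apply: sumr_ge0 => B _; apply: mulr_ge0 => //; exact: ler0n.
apply: le_trans step1 _.
rewrite exchange_big /=.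
set c := expR (- (n%:R * (th * th) / 2)).
rewrite [X in _ <= X]mulrC -count_sets //.
apply: ler_sum => B _.
have -> : \sum_(s : {ffun 'I_n -> X * Y * T}) \prod_i piA PXY W (s i) * (((th / 2 < D s B)%R : bool)%:R)
   = \sum_(s : {ffun 'I_n -> X * Y * T} | th / 2 < D s B) \prod_i piA PXY W (s i).
  rewrite [in RHS]big_mkcond; apply: eq_bigr => s _.
  by case: ifP => _; rewrite ?mulr1 ?mulr0.
have h := @hoeff R _ (piA PXY W) (piA0 hP hW) (piA1 hP hW) n (fun a => gA a \in B) (th / 2) n0 (ltac:(lra)).
apply: le_trans h _.
rewrite /c ler_expR; lra.
Qed.

End Weiss.


Section Theta.
Variable R : realType.
Variables T Y : finType.
Variable n : nat.
Hypothesis n0 : (0 < n)%N.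

Lemma pow2_ge k : (0 < k)%N -> 2 <= 2 ^+ k :> R.
Proof.
case: k => [//|k _]; rewrite exprS.
have : 1 <= 2 ^+ k :> R by apply: exprn_ege1; lra.
nra.
Qed.

Lemma pow2_ge4 k : (1 < k)%N -> 4 <= 2 ^+ k :> R.
Proof.
case: k => [//|[//|k _]]; rewrite !exprS mulrA.
have : 1 <= 2 ^+ k :> R by apply: exprn_ege1; lra.
have : 4 = 2 * 2 :> R by ring.
nra.
Qed.

Lemma theta_ge0 (e : R) : 0 <= theta T Y e n.
Proof. exact: sqrtr_ge0. Qed.

Lemma theta_anti (e e' : R) : (0 < #|T| * #|Y|)%N -> 0 < e -> e <= e' ->
  theta T Y e' n <= theta T Y e n.
Proof.
move=> k0 e0 ee; rewrite /theta; apply: ler_wsqrtr.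
have np : 0 < n%:R :> R by rewrite ltr0n.
apply: ler_wpM2l; first by rewrite divr_ge0 // ltW.
set c := (2 ^+ (#|T| * #|Y|) - 2 : R).
have c0 : 0 <= c by have := pow2_ge k0; rewrite /c; lra.
have [->|cn] := eqVneq c 0; first by rewrite !mul0r.
have cp : 0 < c by rewrite lt0r cn c0.
have e'0 : 0 < e' by apply: lt_le_trans ee.
rewrite ler_ln ?posrE ?divr_gt0 //.
by rewrite ler_pM2l // lef_pV2 ?posrE.
Qed.

Lemma theta_bound (e : R) : (1 < #|T| * #|Y|)%N -> 0 < e -> e <= 1 ->
  (2 ^+ (#|T| * #|Y|) - 2) * expR (- (n%:R * (theta T Y e n * theta T Y e n) / 2)) = e.
Proof.
move=> k1 e0 e1.
have np : 0 < n%:R :> R by rewrite ltr0n.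
set c := (2 ^+ (#|T| * #|Y|) - 2 : R).
have c2 : 2 <= c by have := pow2_ge4 k1; rewrite /c; lra.
have cp : 0 < c by lra.
have ce : 1 <= c / e.
  rewrite ler_pdivlMr //; lra.
have L0 : 0 <= ln (c / e) by apply: ln_ge0.
rewrite /theta -/c -expr2 sqr_sqrtr; last by rewrite mulr_ge0 // divr_ge0 // ltW.
have -> : n%:R * (2 / n%:R * ln (c / e)) / 2 = ln (c / e).
  by field; rewrite lt0r_neq0.
rewrite expRN lnK ?posrE ?divr_gt0 //.
by field; rewrite !lt0r_neq0.
Qed.

End Theta.

Unset Implicit Arguments. Set Strict Implicit. Set Printing Implicit Defensive.

Theorem proposition1 (R : realType) (X Y T : finType) (Lambda : Type)
  (PXY : X -> Y -> R) (W : Lambda -> X -> T -> R) (lam : Lambda)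
  (b alpha : R) (n : nat) :
  1 < b -> 0 <= alpha -> (0 < n)%N ->
  is_dist (fun xy : X * Y => PXY xy.1 xy.2) ->
  (forall l, is_channel (W l)) ->
  mutinf b (joint_TY PXY (W lam)) < alpha ->
  forall u : R, 0 <= u <= 1 ->
    \sum_(s : {ffun 'I_n -> X * Y * T} | (phat b alpha s <= u%:E)%E)
        sample_prob PXY (W lam) s <= u.
Proof.
move=> b1 a0 n0 hP hW hI u /andP[u0 u1].
set Wl := W lam; have hWl := hW lam.
have lb : 0 < ln b by apply: ln_gt0.
have sp (s : {ffun 'I_n -> X * Y * T}) : sample_prob PXY Wl s = \prod_i piA PXY Wl (s i) by [].
under eq_bigr => s _ do rewrite sp.
have pr0 (s : {ffun 'I_n -> X * Y * T}) : 0 <= \prod_i piA PXY Wl (s i).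
  by apply: prodr_ge0 => i _; exact: piA0.
have [T0|cT] := posnP #|T|.
  rewrite big1 // => s _; exfalso.
  have : (0 < #|T|)%N by apply/card_gt0P; exists (s (Ordinal n0)).2.
  by rewrite T0.
have [Y0|cY] := posnP #|Y|.
  rewrite big1 // => s _; exfalso.
  have : (0 < #|Y|)%N by apply/card_gt0P; exists (s (Ordinal n0)).1.2.
  by rewrite Y0.
have k0 : (0 < #|T| * #|Y|)%N by rewrite muln_gt0 cT cY.
have sumAll : \sum_(s : {ffun 'I_n -> X * Y * T}) \prod_i piA PXY Wl (s i) = 1.
  by rewrite (sum_prod_ffun n (piA PXY Wl)) (piA1 hP hWl) expr1n.
have claim : forall e', u < e' -> e' <= 1 ->
    \sum_(s : {ffun 'I_n -> X * Y * T} | (phat b alpha s <= u%:E)%E)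
       \prod_i piA PXY Wl (s i) <= e'.
  move=> e' ue' e'1.
  have e'0 : 0 < e' by lra.
  apply: le_trans (_ : \sum_(s : {ffun 'I_n -> X * Y * T} | theta T Y e' n < L1 PXY Wl s)
       \prod_i piA PXY Wl (s i) <= _).
    apply: sum_pred_le => // s hs.
    have : (phat b alpha s < e'%:E)%E by apply: le_lt_trans hs _; rewrite lte_fin.
    move=> /ereal_inf_lt [z [e [/andP[e0 e1] he] <-]]; rewrite lte_fin => ee'.
    apply: le_lt_trans (theta_anti n0 k0 e0 (ltW ee')) _.
    rewrite ltNge; apply/negP => hle.
    have hk := key_ln (isd2_emp R n0 s) (isd2_joint hP hWl) (theta_ge0 T Y n e) hle.
    have c1 := mutinf_conv b (isd2_emp R n0 s).1.
    have c2 := mutinf_conv b (isd2_joint hP hWl).1.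
    have c3 := deltaI_conv T Y b (theta T Y e n).
    move: he hI; rewrite /Ihat c1 c2 c3 => he hI'.
    have hk' : (MIn (emp_TY R s) - MIn (joint_TY PXY Wl)) / ln b
        <= DIn T Y (theta T Y e n) / ln b by rewrite ler_pM2r // invr_gt0.
    lra.
  apply: le_trans (weiss n0 hP hWl (theta_ge0 T Y n e') cT cY) _.
  have [k1|k1] := ltnP 1 (#|T| * #|Y|).
    by rewrite (theta_bound n0 k1 e'0 e'1).
  have -> : (#|T| * #|Y|)%N = 1%N by apply/eqP; rewrite eqn_leq k1 k0.
  by rewrite expr1 subrr mul0r ltW.
have [->|un1] := eqVneq u 1.
  apply: le_trans (_ : _ <= \sum_(s : {ffun 'I_n -> X * Y * T}) \prod_i piA PXY Wl (s i)) _; last by rewrite sumAll.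
  by apply: sum_pred_le.
have ult : u < 1 by rewrite lt_neqAle un1 u1.
set x := \sum_(s | _) _.
rewrite leNgt; apply/negP => hx.
pose m := Num.min x 1.
have hm1 : m <= 1 by rewrite /m ge_min lexx orbT.
have hmx : m <= x by rewrite /m ge_min lexx.
have hum : u < m by rewrite /m lt_min hx ult.
have := claim ((u + m) / 2) (ltac:(lra)) (ltac:(lra)).
rewrite -/x; lra.
Qed.
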